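(* Let $\eta_1,\eta_3\in[0,1]$ and $\eta_2\ge0$, and define $z^m:=\min\{\eta_2,1\}$ and $z^b:=\min\{\eta_1+\eta_2+\eta_3,1\}-z^m$. Then $$(\eta_1+\eta_3-\eta_1\eta_3)\,e^{-z^m}+1-e^{-z^m}\ \ge\ \frac{2}{e}\,z^b+\frac{3}{2e}\,z^m.$$ *)

(* Defs.v *)
From Stdlib Require Import Reals.
Open Scope R_scope.

(* Main.v *)
Require Import Defs.
From Stdlib Require Import Reals Lra Psatz Factorial.
Open Scope R_scope.

Lemma exp_partial (x : R) (n : nat) : 0 <= x ->
  sum_f_R0 (fun i => / INR (fact i) * x ^ i) n <= exp x.
Proof.
  intro Hx. apply growing_ineq.
  - intro m. change (sum_f_R0 (fun i => / INR (fact i) * x ^ i) (S m)) with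
      (sum_f_R0 (fun i => / INR (fact i) * x ^ i) m + / INR (fact (S m)) * x ^ (S m)).
    assert (0 <= / INR (fact (S m)) * x ^ S m).
    { apply Rmult_le_pos. left; apply Rinv_0_lt_compat, INR_fact_lt_0.
      apply pow_le; auto. }
    lra.
  - unfold exp. destruct (exist_exp x) as [l Hl]. exact Hl.
Qed.

Lemma exp4 (z : R) : 0 <= z -> 1 + z + z^2/2 + z^3/6 + z^4/24 <= exp z.
Proof.
  intro Hz. pose proof (exp_partial z 4 Hz) as H.
  simpl in H. replace (INR (fact 0)) with 1 in H by (simpl; lra).
  unfold fact in H; simpl in H. lra.
Qed.

Lemma e_lb : 2.71825 <= exp 1.
Proof.
  pose proof (exp_partial 1 7 ltac:(lra)) as H.
  unfold fact in H; simpl in H. lra.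
Qed.

Lemma poly1 : forall z, 0 <= z <= 1 -> (1+z)^2 <= 4*(1 + z + z^2/2 + z^3/6 + z^4/24)*(1 - 2*0.36789 + z*0.36789/2).
intros z Hz.
assert (0 <= z^3) by (apply pow_le; lra).
assert (0 <= z^4) by (apply pow_le; lra).
assert (0 <= z^5) by (apply pow_le; lra).
assert (0 <= (z - 0.39)^2) by apply pow2_ge_0.
lra.
Qed.
Lemma poly2 : forall z c, 0 <= z <= 1 -> 0<c<= 0.36789 -> (1 + z + z^2/2 + z^3/6 + z^4/24) - 1 - 3/2*c*z*(1 + z + z^2/2 + z^3/6 + z^4/24) >= 0.
intros z c Hz Hc.
assert (0 <= z^3) by (apply pow_le; lra).
assert (0 <= z^4) by (apply pow_le; lra).
assert (0 <= z^5) by (apply pow_le; lra).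
assert (0 <= c*z^5) by nra.
assert (0 <= c*z^4) by nra.
assert (0 <= c*z^3) by nra.
assert (0 <= c*z^2) by nra.
assert (0 <= c*z) by nra.
nra.
Qed.

Theorem lemma3p3 (eta1 eta2 eta3 : R)
  (h1 : 0 <= eta1 <= 1) (h2 : 0 <= eta2) (h3 : 0 <= eta3 <= 1) :
  let zm := Rmin eta2 1 in
  let zb := Rmin (eta1 + eta2 + eta3) 1 - zm in
  (eta1 + eta3 - eta1 * eta3) * exp (- zm) + 1 - exp (- zm)
    >= 2 / exp 1 * zb + 3 / (2 * exp 1) * zm.
Proof.
  intros zm zb.
  set (c := / exp 1).
  assert (He1 := e_lb).
  assert (Hc : c * exp 1 = 1) by (unfold c; field; lra).
  assert (Hcpos : 0 < c) by (unfold c; apply Rinv_0_lt_compat; lra).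
  assert (Hcub : c <= 0.36789) by nra.
  replace (2 / exp 1 * zb) with (2 * c * zb) by (unfold c; field; lra).
  replace (3 / (2 * exp 1) * zm) with (3/2 * c * zm) by (unfold c; field; lra).
  set (a := eta1) in *. set (b := eta3) in *.
  assert (Hab : 0 <= a * b <= a) by nra.
  assert (Hab2 : 0 <= a * b <= b) by nra.
  destruct (Rle_lt_dec 1 eta2) as [Hbig|Hsmall].
  - assert (zm = 1) by (unfold zm; apply Rmin_right; lra).
    assert (zb = 0) by (unfold zb; rewrite Rmin_right; lra).
    assert (exp (- zm) = c) by (unfold c; rewrite exp_Ropp, H; auto).
    rewrite H1, H0, H.
    nra.
  - assert (Hz : zm = eta2) by (unfold zm; apply Rmin_left; lra).
    set (z := eta2) in *.
    set (E := exp (- zm)).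
    set (Q := exp zm).
    assert (HEQ : E * Q = 1) by (unfold E, Q; rewrite <- exp_plus; replace (-zm+zm) with 0 by ring; apply exp_0).
    assert (HEpos : 0 < E) by apply exp_pos.
    assert (HQ : 1 + z + z^2/2 + z^3/6 + z^4/24 <= Q) by (unfold Q; rewrite Hz; apply exp4; lra).
    set (P := 1 + z + z^2/2 + z^3/6 + z^4/24) in *.
    assert (K1 : (1+z)^2 <= 4*P*(1 - 2*c + z*c/2)).
    { assert ((1+z)^2 <= 4*P*(1 - 2*0.36789 + z*0.36789/2)).
      { unfold P. apply poly1; lra. }
      assert (0 <= P).
      { unfold P. assert (0 <= z^2) by (apply pow_le; lra).
        assert (0 <= z^3) by (apply pow_le; lra).
        assert (0 <= z^4) by (apply pow_le; lra). lra. }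
      assert (0 <= P * ((0.36789 - c) * (2 - z/2))).
      { apply Rmult_le_pos; auto. apply Rmult_le_pos; lra. }
      lra. }
    assert (K1' : E*(1+z)^2/4 <= 1 - 2*c + z*c/2).
    { assert (0 <= 1 - 2*c + z*c/2) by nra.
      assert (P*(1 - 2*c + z*c/2) <= Q*(1 - 2*c + z*c/2)) by nra.
      nra. }
    assert (K2 : 1 - E - 3/2*c*z >= 0).
    { assert (P - 1 - 3/2*c*z*P >= 0) by (unfold P; apply poly2; lra).
      assert (0 <= 1 - 3/2*c*z) by nra.
      assert (Q - 1 - 3/2*c*z*Q >= 0) by nra.
      nra. }
    rewrite Hz.
    set (t := a + b) in *.
    set (w := 1 - z) in *.
    assert (Hs : a + b - a*b >= t - t^2/4) by (unfold t; assert (0 <= (a-b)^2) by apply pow2_ge_0; nra).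
    assert (HEs : E*(a + b - a*b) >= E*(t - t^2/4)) by (apply Rle_ge, Rmult_le_compat_l; lra).
    destruct (Rle_lt_dec t w) as [Htw|Htw].
    + assert (zb = t) by (unfold zb; rewrite Hz, Rmin_left; unfold t, w in *; lra).
      rewrite H.
      (* phi(t) >= (t/w) phi(w) *)
      assert (Hw : 0 < w) by (unfold w; lra).
      assert (Kw : 1 - E - 3/2*c*z + E*(w - w^2/4) - 2*c*w >= 0).
      { assert (Hww : w - w^2/4 = 1 - (1+z)^2/4) by (unfold w; field). rewrite Hww. unfold w. lra. }
      assert (Ht0 : 0 <= t) by (unfold t; lra).
      assert (H4 : 0 <= w*E*t*(w-t)/4).
      { unfold Rdiv. apply Rmult_le_pos; [|lra]. apply Rmult_le_pos; [|lra].
        apply Rmult_le_pos; [|lra]. apply Rmult_le_pos; lra. }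
      assert (H5 : 0 <= (w-t)*(1 - E - 3/2*c*z)) by (apply Rmult_le_pos; lra).
      assert (H6 : 0 <= t*(1 - E - 3/2*c*z + E*(w - w^2/4) - 2*c*w)) by (apply Rmult_le_pos; lra).
      assert (H7 : w*(E*(a + b - a*b) - E*(t - t^2/4)) >= 0) by (apply Rle_ge, Rmult_le_pos; lra).
      assert (H8 : w*((a+b-a*b)*E + 1 - E - (2*c*t + 3/2*c*z)) >= 0).
      { assert (w*((a+b-a*b)*E + 1 - E - (2*c*t + 3/2*c*z)) =
          w*(E*(a + b - a*b) - E*(t - t^2/4)) + w*E*t*(w-t)/4 + (w-t)*(1 - E - 3/2*c*z)
          + t*(1 - E - 3/2*c*z + E*(w - w^2/4) - 2*c*w)) by field.
        lra. }
      assert (0 <= (a+b-a*b)*E + 1 - E - (2*c*t + 3/2*c*z)) by (apply (Rmult_le_reg_l w); lra).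
      unfold t in *; lra.
    + assert (zb = w) by (unfold zb; rewrite Hz, Rmin_right; unfold t, w in *; lra).
      rewrite H.
      assert (Kw : 1 - E - 3/2*c*z + E*(w - w^2/4) - 2*c*w >= 0).
      { assert (Hww : w - w^2/4 = 1 - (1+z)^2/4) by (unfold w; field). rewrite Hww. unfold w. lra. }
      assert (t - t^2/4 >= w - w^2/4) by (unfold t, w in *; nra).
      assert (E*(t - t^2/4) >= E*(w - w^2/4)) by (apply Rle_ge, Rmult_le_compat_l; lra).
      unfold t in *; lra.
Qed.
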